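(* Let $\mathscr H$ be a complex Hilbert space and $\mathbf{X},\mathbf{Y},\mathbf{Z},\mathbf{W}\in\mathbb{B}(\mathscr H)^d$. Then $$w_e\left(\begin{bmatrix}\mathbf{X}&\mathbf{Y}\\\mathbf{Z}&\mathbf{W}\end{bmatrix}\right)\le\frac12\Big(w_e(\mathbf{X})+w_e(\mathbf{W})+\sqrt{(w_e(\mathbf{X})-w_e(\mathbf{W}))^2+(\|\mathbf{Y}\|+\|\mathbf{Z}\|)^2}\Big).$$
   Context: $\mathbb{B}(\mathscr H)$ denotes the bounded linear operators on $\mathscr H$. For $\mathbf{T}=(T_1,\dots,T_d)$: $w_e(\mathbf{T})=\sup\{(\sum_{k}|\langle T_kx,x\rangle|^2)^{1/2}: \|x\|=1\}$ and $\|\mathbf{T}\|=\sup\{(\sum_k\|T_kx\|^2)^{1/2}: \|x\|=1\}$. For $d$-tuples $\mathbf{X},\mathbf{Y},\mathbf{Z},\mathbf{W}$, $\begin{bmatrix}\mathbf{X}&\mathbf{Y}\\\mathbf{Z}&\mathbf{W}\end{bmatrix}$ denotes the $d$-tuple $\left(\begin{bmatrix}X_k&Y_k\\Z_k&W_k\end{bmatrix}\right)_{k=1}^d$ of operators on $\mathscr H\oplus\mathscr H$. *)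

(* Defs.v *)
From HB Require Import structures.
From mathcomp Require Import all_boot all_order all_algebra.
From mathcomp Require Import classical_sets reals.
From mathcomp Require Import complex.
Set Implicit Arguments. Unset Strict Implicit. Unset Printing Implicit Defensive.
Import Order.TTheory GRing.Theory Num.Theory.
Local Open Scope ring_scope.
Local Open Scope classical_set_scope.

Section Hilbert.
Variable R : realType.
Local Notation C := (complex R).

Definition cabs2 (z : C) : R := (complex.Re z) ^+ 2 + (complex.Im z) ^+ 2.

Variable V : lmodType C.

Definition is_inner_product (ip : V -> V -> C) : Prop :=
  [/\ (forall (a : C) (x y z : V), ip (a *: x + y) z = a * ip x z + ip y z),
      (forall x y : V, ip y x = conjc (ip x y)),
      (forall x : V, 0 <= ip x x) &
      (forall x : V, ip x x = 0 -> x = 0)].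

Definition hnorm (ip : V -> V -> C) (x : V) : R := Num.sqrt (complex.Re (ip x x)).

Definition hilbert_complete (ip : V -> V -> C) : Prop :=
  forall u : nat -> V,
    (forall e : R, 0 < e -> exists N : nat, forall m n : nat,
        (N <= m)%N -> (N <= n)%N -> hnorm ip (u m - u n) < e) ->
    exists l : V, forall e : R, 0 < e -> exists N : nat, forall n : nat,
        (N <= n)%N -> hnorm ip (u n - l) < e.

Definition is_hilbert_space (ip : V -> V -> C) : Prop :=
  is_inner_product ip /\ hilbert_complete ip.

Definition bounded_op (ip : V -> V -> C) (T : V -> V) : Prop :=
  (forall (a : C) (x y : V), T (a *: x + y) = a *: T x + T y) /\
  exists M : R, forall x : V, hnorm ip (T x) <= M * hnorm ip x.

Definition euclid_numrad (ip : V -> V -> C) (d : nat) (T : 'I_d -> V -> V) : R :=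
  sup [set r : R | exists x : V, hnorm ip x = 1 /\
         r = Num.sqrt (\sum_(k < d) cabs2 (ip (T k x) x))].

Definition tuple_opnorm (ip : V -> V -> C) (d : nat) (T : 'I_d -> V -> V) : R :=
  sup [set r : R | exists x : V, hnorm ip x = 1 /\
         r = Num.sqrt (\sum_(k < d) hnorm ip (T k x) ^+ 2)].

End Hilbert.

Definition ip_dsum (R : realType) (V : lmodType (complex R))
  (ip : V -> V -> complex R) (p q : (V * V)%type) : complex R :=
  ip p.1 q.1 + ip p.2 q.2.

Definition block_op (R : realType) (V : lmodType (complex R))
  (X Y Z W : V -> V) (p : (V * V)%type) : (V * V)%type :=
  (X p.1 + Y p.2, Z p.1 + W p.2).

Definition block_tuple (R : realType) (V : lmodType (complex R)) (d : nat)
  (X Y Z W : 'I_d -> V -> V) : 'I_d -> (V * V)%type -> (V * V)%type :=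
  fun k => block_op (X k) (Y k) (Z k) (W k).

(* Main.v *)
Require Import Defs.
From HB Require Import structures.
From mathcomp Require Import all_boot all_order all_algebra.
From mathcomp Require Import classical_sets reals.
From mathcomp Require Import complex.
From mathcomp Require Import boolp ring lra.
Import Order.TTheory GRing.Theory Num.Theory.
Local Open Scope ring_scope.
Local Open Scope complex_scope.



Section RealLemmas.
Variable R : realType.

Lemma discr_le (a p q : R) : 0 <= q ->
  (forall t : R, 0 <= a - 2 * t * p + t ^+ 2 * q) -> p ^+ 2 <= a * q.
Proof.
move=> q0 H.
have [qp|] := ltrP 0 q.
  have := H (p / q).
  have E : a - 2 * (p / q) * p + (p / q) ^+ 2 * q = (a * q - p ^+ 2) / q.
    by field; rewrite gt_eqF.
  by rewrite E pmulr_lge0 ?invr_gt0 // subr_ge0.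
move=> qle; have q00 : q = 0 by apply/eqP; rewrite eq_le qle q0.
subst q; rewrite mulr0.
have [p0|pn0] := eqVneq p 0; first by rewrite p0 expr0n.
have := H ((a + 1) / (2 * p)).
have E : a - 2 * ((a + 1) / (2 * p)) * p + ((a + 1) / (2 * p)) ^+ 2 * 0 = -1.
  by field.
by rewrite E ler0N1.
Qed.

Lemma eig_bound (a b p q s : R) : a ^+ 2 + b ^+ 2 = 1 ->
  a ^+ 2 * p + b ^+ 2 * q + s * (a * b) <=
  2^-1 * (p + q + Num.sqrt ((p - q) ^+ 2 + s ^+ 2)).
Proof.
move=> hab.
set L := (a ^+ 2 - b ^+ 2) * (p - q) + 2 * a * b * s.
suff : L <= Num.sqrt ((p - q) ^+ 2 + s ^+ 2).
  move=> HL.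
  have E : a ^+ 2 * p + b ^+ 2 * q + s * (a * b) = 2^-1 * (p + q + L).
    have E2 : p + q = (a ^+ 2 + b ^+ 2) * (p + q) by rewrite hab mul1r.
    by rewrite /L E2; field.
  rewrite E ler_pM2l ?invr_gt0 ?ltr0n // lerD2l //.
apply: (le_trans (ler_norm L)); rewrite -sqrtr_sqr ler_sqrt ?addr_ge0 ?sqr_ge0 //.
have -> : (p - q) ^+ 2 + s ^+ 2 = (a ^+ 2 + b ^+ 2) ^+ 2 * ((p - q) ^+ 2 + s ^+ 2)
  by rewrite hab expr1n mul1r.
rewrite -subr_ge0.
have -> : (a ^+ 2 + b ^+ 2) ^+ 2 * ((p - q) ^+ 2 + s ^+ 2) - L ^+ 2 =
  ((a ^+ 2 - b ^+ 2) * s - 2 * a * b * (p - q)) ^+ 2 by rewrite /L; ring.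
exact: sqr_ge0.
Qed.

End RealLemmas.


Section CLemmas.
Variable R : realType.
Local Notation C := (complex R).

Lemma cabs2_ge0 (z : C) : 0 <= cabs2 z.
Proof. by rewrite /cabs2 addr_ge0 ?sqr_ge0. Qed.

Lemma cabs2C (z : C) : (cabs2 z)%:C = z * conjc z.
Proof.
case: z => a b; rewrite /cabs2 /=; apply/eqP; rewrite eq_complex /=; apply/andP; split; apply/eqP; ring.
Qed.

Lemma cabs2Mr (k : R) (z : C) : cabs2 (k%:C * z) = k ^+ 2 * cabs2 z.
Proof. case: z => a b; rewrite /cabs2 /=; ring. Qed.

Lemma cabs2D (u v : C) : cabs2 (u + v) =
  cabs2 u + cabs2 v + 2 * (complex.Re u * complex.Re v + complex.Im u * complex.Im v).
Proof. case: u => a b; case: v => c e; rewrite /cabs2 /=; ring. Qed.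

Lemma cabs2_0 : cabs2 (0 : C) = 0.
Proof. by rewrite /cabs2 /= expr0n /= addr0. Qed.

End CLemmas.


Section Mink.
Variable R : realType.
Local Notation C := (complex R).

Definition rdot (u v : C) : R :=
  complex.Re u * complex.Re v + complex.Im u * complex.Im v.

Lemma cabs2_lin (t : R) (u v : C) :
  cabs2 (t%:C * u - v) = t ^+ 2 * cabs2 u - 2 * t * rdot u v + cabs2 v.
Proof. case: u => a b; case: v => c e; rewrite /cabs2 /rdot /=; ring. Qed.

Lemma cabs2_add (u v : C) :
  cabs2 (u + v) = cabs2 u + cabs2 v + 2 * rdot u v.
Proof. case: u => a b; case: v => c e; rewrite /cabs2 /rdot /=; ring. Qed.

Lemma mink (d : nat) (u v : 'I_d -> C) :
  Num.sqrt (\sum_(k < d) cabs2 (u k + v k)) <=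
  Num.sqrt (\sum_(k < d) cabs2 (u k)) + Num.sqrt (\sum_(k < d) cabs2 (v k)).
Proof.
set SA := \sum_(k < d) cabs2 (u k); set SB := \sum_(k < d) cabs2 (v k).
set P := \sum_(k < d) rdot (u k) (v k).
have SA0 : 0 <= SA by apply: sumr_ge0 => k _; exact: cabs2_ge0.
have SB0 : 0 <= SB by apply: sumr_ge0 => k _; exact: cabs2_ge0.
have HP : P ^+ 2 <= SB * SA.
  apply: discr_le => // t.
  have <- : \sum_(k < d) cabs2 (t%:C * u k - v k) = SB - 2 * t * P + t ^+ 2 * SA.
    under eq_bigr => k _ do rewrite cabs2_lin.
    rewrite big_split /= big_split /= sumrN -!mulr_sumr; rewrite /SA /SB /P; ring.
  by apply: sumr_ge0 => k _; exact: cabs2_ge0.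
have HP2 : P <= Num.sqrt SA * Num.sqrt SB.
  apply: (le_trans (ler_norm P)); rewrite -sqrtr_sqr -sqrtrM // mulrC.
  by rewrite ler_sqrt ?mulr_ge0.
have -> : \sum_(k < d) cabs2 (u k + v k) = SA + SB + 2 * P.
  under eq_bigr => k _ do rewrite cabs2_add.
  by rewrite big_split /= big_split /= -mulr_sumr.
rewrite -[X in _ <= X]ger0_norm ?addr_ge0 ?sqrtr_ge0 // -sqrtr_sqr.
rewrite ler_sqrt ?sqr_ge0 //.
have -> : (Num.sqrt SA + Num.sqrt SB) ^+ 2 =
  Num.sqrt SA ^+ 2 + Num.sqrt SB ^+ 2 + 2 * (Num.sqrt SA * Num.sqrt SB) by ring.
rewrite !sqr_sqrtr //; lra.
Qed.

End Mink.

Set Implicit Arguments. Unset Strict Implicit.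

Section IP.
Variable R : realType.
Local Notation C := (complex R).
Variable V : lmodType C.
Variable ip : V -> V -> C.
Hypothesis Hip : is_inner_product ip.

Lemma ipDl x y z : ip (x + y) z = ip x z + ip y z.
Proof. by case: Hip => H _ _ _; rewrite -[x]scale1r H mul1r scale1r. Qed.

Lemma ip0l z : ip 0 z = 0.
Proof. by apply: (addrI (ip 0 z)); rewrite -ipDl !addr0. Qed.

Lemma ipZl a x z : ip (a *: x) z = a * ip x z.
Proof. by case: Hip => H _ _ _; rewrite -[a *: x]addr0 H ip0l addr0. Qed.

Lemma ipC x y : ip y x = conjc (ip x y).
Proof. by case: Hip => _ H _ _; apply: H. Qed.

Lemma ipDr x y z : ip z (x + y) = ip z x + ip z y.
Proof. by rewrite ipC ipDl rmorphD [ip z x]ipC [ip z y]ipC. Qed.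

Lemma ipZr a x z : ip z (a *: x) = conjc a * ip z x.
Proof. by rewrite ipC ipZl rmorphM [ip z x]ipC. Qed.

Lemma ip0r z : ip z 0 = 0.
Proof. by rewrite ipC ip0l; apply/eqP; rewrite conjc_eq0. Qed.

Lemma ip_self x : ip x x = (hnorm ip x ^+ 2)%:C.
Proof.
case: Hip => _ _ H _; have := H x; rewrite /hnorm.
case: (ip x x) => a b; rewrite lecE /= => /andP [/eqP -> ha].
by rewrite sqr_sqrtr.
Qed.

Lemma hnorm_ge0 x : 0 <= hnorm ip x.
Proof. exact: sqrtr_ge0. Qed.

Lemma hnorm_eq0 x : hnorm ip x = 0 -> x = 0.
Proof.
move=> h; case: Hip => _ _ _ H; apply: H; by rewrite ip_self h expr0n.
Qed.

Lemma CS u v : cabs2 (ip u v) <= hnorm ip u ^+ 2 * hnorm ip v ^+ 2.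
Proof.
set c := ip u v; set A := hnorm ip u ^+ 2; set B := hnorm ip v ^+ 2.
have B0 : 0 <= B by rewrite sqr_ge0.
have [p0|pn0] := eqVneq (cabs2 c) 0.
  by rewrite p0 mulr_ge0 ?sqr_ge0.
have pp : 0 < cabs2 c by rewrite lt_neqAle eq_sym pn0 cabs2_ge0.
suff : cabs2 c ^+ 2 <= A * (cabs2 c * B).
  by rewrite expr2 mulrCA ler_pM2l.
apply: discr_le; first by rewrite mulr_ge0 ?cabs2_ge0.
move=> t; set w := u + (- (t%:C * c)) *: v.
have : 0 <= hnorm ip w ^+ 2 by rewrite sqr_ge0.
suff -> : hnorm ip w ^+ 2 = A - 2 * t * cabs2 c + t ^+ 2 * (cabs2 c * B) by [].
apply: complexI; rewrite -ip_self /w !ipDl !ipDr !ipZl !ipZr !ip_self.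
rewrite -/A -/B -/c [ip v u]ipC -/c.
rewrite /A /B; move: (hnorm ip u ^+ 2) (hnorm ip v ^+ 2) => a b.
clear w pn0 pp. case: c => c1 c2; rewrite /cabs2 /=.
apply/eqP; rewrite eq_complex /=; apply/andP; split; apply/eqP; ring.
Qed.

End IP.


Section Ops.
Variable R : realType.
Local Notation C := (complex R).
Variable V : lmodType C.
Variable ip : V -> V -> C.
Hypothesis Hip : is_inner_product ip.
Local Notation hn := (hnorm ip).

Lemma hnorm_sqr x : hn x = Num.sqrt (hn x ^+ 2).
Proof. by rewrite sqrtr_sqr ger0_norm // hnorm_ge0. Qed.

Lemma hnormZ (k : R) x : hn (k%:C *: x) = `|k| * hn x.
Proof.
rewrite hnorm_sqr.
have -> : hn (k%:C *: x) ^+ 2 = (k * hn x) ^+ 2.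
  apply: complexI; rewrite -ip_self // ipZl // ipZr // ip_self // conjc_real.
  by rewrite -!rmorphM; congr (_%:C); ring.
by rewrite sqrtr_sqr normrM (ger0_norm (hnorm_ge0 ip x)).
Qed.

Lemma op0 (T : V -> V) : bounded_op ip T -> T 0 = 0.
Proof.
case=> H _; have := H 1 0 0; rewrite scaler0 addr0 scale1r => h.
by apply: (addrI (T 0)); rewrite -h addr0.
Qed.

Lemma opZ (T : V -> V) a x : bounded_op ip T -> T (a *: x) = a *: T x.
Proof. move=> hT; case: (hT) => H _; by rewrite -[a *: x]addr0 H op0 // addr0. Qed.

Variable d : nat.

Lemma tuple_bnd (T : 'I_d -> V -> V) : (forall k, bounded_op ip (T k)) ->
  exists M, forall x, hn x = 1 -> \sum_(k < d) hn (T k x) ^+ 2 <= M.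
Proof.
move=> hT.
have [f hf] : exists f : 'I_d -> R, forall k x, hn (T k x) <= f k * hn x.
  apply: (@fin_all_exists _ (fun=> R) (fun k M => forall x, hn (T k x) <= M * hn x)).
  by move=> k; case: (hT k).
exists (\sum_(k < d) f k ^+ 2) => x hx; apply: ler_sum => k _.
have := hf k x; rewrite hx mulr1 => h.
by rewrite !expr2 ler_pM // hnorm_ge0.
Qed.

Lemma numrad_ub (T : 'I_d -> V -> V) : (forall k, bounded_op ip (T k)) ->
  has_ubound [set r : R | exists x : V, hn x = 1 /\
         r = Num.sqrt (\sum_(k < d) cabs2 (ip (T k x) x))].
Proof.
move=> /tuple_bnd [M hM]; exists (Num.sqrt M) => r [x [hx ->]].
apply: (le_trans _ (_ : Num.sqrt (\sum_(k < d) hn (T k x) ^+ 2) <= _)).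
  rewrite ler_sqrt ?sumr_ge0 // => [|k _]; last by rewrite sqr_ge0.
  apply: ler_sum => k _; apply: (le_trans (CS Hip _ _)).
  by rewrite hx expr1n mulr1.
by rewrite ler_sqrt ?(le_trans _ (hM x hx)) ?sumr_ge0 // => k _; rewrite sqr_ge0.
Qed.

Lemma opnorm_ub (T : 'I_d -> V -> V) : (forall k, bounded_op ip (T k)) ->
  has_ubound [set r : R | exists x : V, hn x = 1 /\
         r = Num.sqrt (\sum_(k < d) hn (T k x) ^+ 2)].
Proof.
move=> /tuple_bnd [M hM]; exists (Num.sqrt M) => r [x [hx ->]].
by rewrite ler_sqrt ?(le_trans _ (hM x hx)) ?sumr_ge0 // => k _; rewrite sqr_ge0.
Qed.

End Ops.


Section Ops2.
Variable R : realType.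
Local Notation C := (complex R).
Variable V : lmodType C.
Variable ip : V -> V -> C.
Hypothesis Hip : is_inner_product ip.
Local Notation hn := (hnorm ip).
Variable d : nat.

Lemma numrad_le (T : 'I_d -> V -> V) (hT : forall k, bounded_op ip (T k)) x :
  Num.sqrt (\sum_(k < d) cabs2 (ip (T k x) x)) <= euclid_numrad ip T * hn x ^+ 2.
Proof.
set r := hn x.
have r0 : 0 <= r by exact: hnorm_ge0.
have [rz|rnz] := eqVneq r 0.
  have x0 : x = 0 by exact: (hnorm_eq0 Hip).
  rewrite rz expr0n mulr0 big1 ?sqrtr0 // => k _.
  by rewrite x0 (op0 (hT k)) (ip0l Hip) cabs2_0.
have rp : 0 < r by rewrite lt_neqAle eq_sym rnz r0.
set y := (r^-1)%:C *: x.
have hy : hn y = 1 by rewrite /y hnormZ // ger0_norm ?invr_ge0 // mulVf.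
have := ub_le_sup (numrad_ub Hip hT) (ex_intro _ y (conj hy erefl)).
have -> : \sum_(k < d) cabs2 (ip (T k y) y) =
          (r^-1 * r^-1) ^+ 2 * \sum_(k < d) cabs2 (ip (T k x) x).
  rewrite mulr_sumr; apply: eq_bigr => k _.
  rewrite /y (opZ _ _ (hT k)) ipZl // ipZr // conjc_real mulrA -rmorphM cabs2Mr //.
rewrite sqrtrM ?sqr_ge0 // sqrtr_sqr ger0_norm ?mulr_ge0 ?invr_ge0 // => h.
rewrite -/(euclid_numrad ip T) in h.
have -> : Num.sqrt (\sum_(k < d) cabs2 (ip (T k x) x)) =
   r ^+ 2 * (r^-1 * r^-1 * Num.sqrt (\sum_(k < d) cabs2 (ip (T k x) x))).
  by field; rewrite gt_eqF.
by rewrite mulrC ler_wpM2r ?sqr_ge0.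
Qed.

Lemma opnorm_le (T : 'I_d -> V -> V) (hT : forall k, bounded_op ip (T k)) x :
  Num.sqrt (\sum_(k < d) hn (T k x) ^+ 2) <= tuple_opnorm ip T * hn x.
Proof.
set r := hn x.
have r0 : 0 <= r by exact: hnorm_ge0.
have [rz|rnz] := eqVneq r 0.
  have x0 : x = 0 by exact: (hnorm_eq0 Hip).
  rewrite rz mulr0 big1 ?sqrtr0 // => k _.
  rewrite x0 (op0 (hT k)); have -> : (0 : V) = (0 : R)%:C *: 0 by rewrite scaler0.
  by rewrite hnormZ // normr0 mul0r expr0n.
have rp : 0 < r by rewrite lt_neqAle eq_sym rnz r0.
set y := (r^-1)%:C *: x.
have hy : hn y = 1 by rewrite /y hnormZ // ger0_norm ?invr_ge0 // mulVf.
have := ub_le_sup (opnorm_ub hT) (ex_intro _ y (conj hy erefl)).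
have -> : \sum_(k < d) hn (T k y) ^+ 2 =
          r^-1 ^+ 2 * \sum_(k < d) hn (T k x) ^+ 2.
  rewrite mulr_sumr; apply: eq_bigr => k _.
  by rewrite /y (opZ _ _ (hT k)) hnormZ // ger0_norm ?invr_ge0 // exprMn.
rewrite sqrtrM ?sqr_ge0 // sqrtr_sqr ger0_norm ?invr_ge0 // => h.
rewrite -/(tuple_opnorm ip T) in h.
have -> : Num.sqrt (\sum_(k < d) hn (T k x) ^+ 2) =
   r * (r^-1 * Num.sqrt (\sum_(k < d) hn (T k x) ^+ 2)).
  by field; rewrite gt_eqF.
by rewrite mulrC ler_wpM2r.
Qed.

End Ops2.


Lemma sup_ge0' (R : realType) (E : set R) : (forall r, E r -> 0 <= r) -> 0 <= sup E.
Proof.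
move=> H; have [hs|nhs] := pselect (has_sup E); last by rewrite sup_out.
case: (hs) => [[e Ee] _]; exact: le_trans (H e Ee) (sup_upper_bound hs Ee).
Qed.

Lemma sup_le_b (R : realType) (E : set R) b : 0 <= b ->
  (forall r, E r -> r <= b) -> sup E <= b.
Proof.
move=> b0 key; have [ne|nne] := pselect (exists x, E x).
  by apply: ge_sup => // r; exact: key.
by rewrite sup_out // => -[[x Ex] _]; apply: nne; exists x.
Qed.

Section Cross.
Variable R : realType.
Local Notation C := (complex R).
Variable V : lmodType C.
Variable ip : V -> V -> C.
Hypothesis Hip : is_inner_product ip.
Local Notation hn := (hnorm ip).
Variable d : nat.

Lemma cross_le (T : 'I_d -> V -> V) (hT : forall k, bounded_op ip (T k)) x y :
  Num.sqrt (\sum_(k < d) cabs2 (ip (T k y) x)) <= hn x * (tuple_opnorm ip T * hn y).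
Proof.
apply: le_trans (_ : Num.sqrt (hn x ^+ 2 * \sum_(k < d) hn (T k y) ^+ 2) <= _).
  have S0 : 0 <= hn x ^+ 2 * \sum_(k < d) hn (T k y) ^+ 2.
    by rewrite mulr_ge0 ?sqr_ge0 // sumr_ge0 // => k _; rewrite sqr_ge0.
  rewrite ler_sqrt //.
  rewrite mulr_sumr; apply: ler_sum => k _; rewrite mulrC; exact: CS.
rewrite sqrtrM ?sqr_ge0 // sqrtr_sqr ger0_norm ?(hnorm_ge0 ip x) //.
by rewrite ler_wpM2l ?(hnorm_ge0 ip x) // opnorm_le.
Qed.

End Cross.


Unset Implicit Arguments. Set Strict Implicit.
Local Close Scope complex_scope.

Theorem corollary3p5 (R : realType) (V : lmodType (complex R))
  (ip : V -> V -> complex R) (HH : is_hilbert_space ip)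
  (d : nat) (X Y Z W : 'I_d -> V -> V)
  (hX : forall k, bounded_op ip (X k)) (hY : forall k, bounded_op ip (Y k))
  (hZ : forall k, bounded_op ip (Z k)) (hW : forall k, bounded_op ip (W k)) :
  euclid_numrad (ip_dsum ip) (block_tuple X Y Z W) <=
  2^-1 * (euclid_numrad ip X + euclid_numrad ip W +
          Num.sqrt ((euclid_numrad ip X - euclid_numrad ip W) ^+ 2 +
                    (tuple_opnorm ip Y + tuple_opnorm ip Z) ^+ 2)).
Proof.
case: HH => Hip _.
set wX := euclid_numrad ip X; set wW := euclid_numrad ip W.
set nY := tuple_opnorm ip Y; set nZ := tuple_opnorm ip Z.
set RHS := 2^-1 * _.
have wX0 : 0 <= wX by apply: sup_ge0' => r [x [_ ->]]; exact: sqrtr_ge0.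
have wW0 : 0 <= wW by apply: sup_ge0' => r [x [_ ->]]; exact: sqrtr_ge0.
have RHS0 : 0 <= RHS.
  apply: mulr_ge0; first by rewrite invr_ge0.
  by apply: addr_ge0; [exact: addr_ge0 | exact: sqrtr_ge0].
rewrite /euclid_numrad.
apply: sup_le_b => //.
  move=> r [[x1 x2] [hp ->]].
  have hab : hnorm ip x1 ^+ 2 + hnorm ip x2 ^+ 2 = 1.
    move: hp; rewrite {1}/hnorm /ip_dsum /= (ip_self Hip x1) (ip_self Hip x2) -rmorphD /= => hp.
    have := congr1 (fun t => t ^+ 2) hp; rewrite /= sqr_sqrtr ?expr1n //.
    by apply: addr_ge0; exact: sqr_ge0.
  have -> : \sum_(k < d) cabs2 (ip_dsum ip (block_tuple X Y Z W k (x1, x2)) (x1, x2)) =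
     \sum_(k < d) cabs2 ((ip (X k x1) x1 + ip (Y k x2) x1) +
                         (ip (Z k x1) x2 + ip (W k x2) x2)).
    by apply: eq_bigr => k _; rewrite /ip_dsum /block_tuple /block_op /= !(ipDl Hip).
  apply: le_trans (@mink R d (fun k => ip (X k x1) x1 + ip (Y k x2) x1)
                        (fun k => ip (Z k x1) x2 + ip (W k x2) x2)) _.
  have m1 := @mink R d (fun k => ip (X k x1) x1) (fun k => ip (Y k x2) x1).
  have m2 := @mink R d (fun k => ip (Z k x1) x2) (fun k => ip (W k x2) x2).
  have h1 := numrad_le Hip hX x1; have h2 := cross_le Hip hY x1 x2.
  have h3 := cross_le Hip hZ x2 x1; have h4 := numrad_le Hip hW x2.
  have h5 := @eig_bound R _ _ wX wW (nY + nZ) hab.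
  rewrite -/wX -/wW -/nY -/nZ in h1 h2 h3 h4.
  rewrite /RHS; simpl in m1, m2 |- *.
  set a := hnorm ip x1 in h1 h2 h3 h4 h5 *; set b := hnorm ip x2 in h1 h2 h3 h4 h5 *.
  have e : (nY + nZ) * (a * b) = a * (nY * b) + b * (nZ * a) by ring.
  rewrite e in h5.
  lra.
Qed.
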